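(* Let $\varphi=\frac{1+\sqrt5}{2}$ and for every integer $k$ let $F_k=\frac{\varphi^k-(-1/\varphi)^k}{\varphi+1/\varphi}$. On the complex vector space with basis $\{|n_1,n_2\rangle:n_1,n_2\ge0\}$ define, for $i=1,2$, operators $N_i$, $b_i$, $b_i^+$ acting on the $i$-th index by $N_1|n_1,n_2\rangle=n_1|n_1,n_2\rangle$, $b_1^+|n_1,n_2\rangle=\sqrt{F_{n_1+1}}|n_1+1,n_2\rangle$, $b_1|n_1,n_2\rangle=\sqrt{F_{n_1}}|n_1-1,n_2\rangle$ (zero if $n_1=0$), and analogously for index 2. Let $(-1)^{-N_2/2}$ be the diagonal operator acting on $|n_1,n_2\rangle$ by $e^{-i\pi n_2/2}$, let $J_z=\frac{N_1-N_2}2$, and let $[2J_z]_F$ be the diagonal operator acting by $F_{n_1-n_2}$. Define $$\tilde J_+^F=(-1)^{-N_2/2}b_1^+b_2,\qquad \tilde J_-^F=b_2^+b_1(-1)^{-N_2/2},\qquad \tilde J_z^F=J_z.$$ Then $$\tilde J_+^F\tilde J_-^F+\tilde J_-^F\tilde J_+^F=[2J_z]_F,\qquad [\tilde J_z^F,\tilde J_\pm^F]=\pm\tilde J_\pm^F.$$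
   Context: $[A,B]=AB-BA$. *)

(* Defs.v *)
From mathcomp Require Import all_boot all_order all_algebra all_field.
Set Implicit Arguments. Unset Strict Implicit. Unset Printing Implicit Defensive.
Import Order.TTheory GRing.Theory Num.Theory.
Local Open Scope ring_scope.

Definition phi : algC := (1 + sqrtC 5) / 2.
Definition Fib (k : int) : algC :=
  (phi ^ k - (- phi^-1) ^ k) / (phi + phi^-1).

(* A vector of the space with basis |n1,n2> is given by its coefficients
   v n1 n2 (coefficient of |n1,n2>); vectors of the space are the finitely
   supported ones. *)
Definition vec := nat -> nat -> algC.
Definition fin_supp (v : vec) : Prop :=
  exists M : nat, forall n1 n2, (M <= n1 + n2)%N -> v n1 n2 = 0.
Definition op := vec -> vec.

(* Operators, written in coefficient form; e.g. b1p is the linear map with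
   b1^+ |n1,n2> = sqrt(F_{n1+1}) |n1+1,n2>, and b1 |n1,n2> = sqrt(F_{n1}) |n1-1,n2>
   (0 if n1 = 0). *)
Definition N1 : op := fun v n1 n2 => n1%:R * v n1 n2.
Definition N2 : op := fun v n1 n2 => n2%:R * v n1 n2.
Definition b1p : op := fun v n1 n2 =>
  if n1 is m.+1 then sqrtC (Fib (m.+1)%:Z) * v m n2 else 0.
Definition b2p : op := fun v n1 n2 =>
  if n2 is m.+1 then sqrtC (Fib (m.+1)%:Z) * v n1 m else 0.
Definition b1 : op := fun v n1 n2 => sqrtC (Fib (n1.+1)%:Z) * v n1.+1 n2.
Definition b2 : op := fun v n1 n2 => sqrtC (Fib (n2.+1)%:Z) * v n1 n2.+1.

(* (-1)^{-N2/2} : |n1,n2> |-> e^{-i pi n2/2} |n1,n2> = (-i)^{n2} |n1,n2>. *)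
Definition phaseN2 : op := fun v n1 n2 => (- 'i) ^+ n2 * v n1 n2.
Definition Jz : op := fun v n1 n2 => ((n1%:R - n2%:R) / 2) * v n1 n2.
Definition twoJzF : op := fun v n1 n2 => Fib (n1%:Z - n2%:Z) * v n1 n2.

Definition opcomp (A B : op) : op := fun v => A (B v).
Definition opadd (A B : op) : op := fun v n1 n2 => A v n1 n2 + B v n1 n2.
Definition opsub (A B : op) : op := fun v n1 n2 => A v n1 n2 - B v n1 n2.
Definition opopp (A : op) : op := fun v n1 n2 => - A v n1 n2.
Definition commut (A B : op) : op := opsub (opcomp A B) (opcomp B A).

Definition JpF : op := opcomp phaseN2 (opcomp b1p b2).
Definition JmF : op := opcomp b2p (opcomp b1 phaseN2).
Definition JzF : op := Jz.

(* Main.v *)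
Require Import Defs.
From mathcomp Require Import all_boot all_order all_algebra all_field ring.
Import Order.TTheory GRing.Theory Num.Theory.
Local Open Scope ring_scope.
From Stdlib Require Import FunctionalExtensionality.

Lemma phi_gt0 : 0 < phi.
Proof. rewrite /phi divr_gt0 // ltr_wpDr // sqrtC_ge0 //. Qed.

Lemma FibE (n : nat) : Fib n%:Z = (phi ^+ n - (- phi^-1) ^+ n) / (phi + phi^-1).
Proof. by []. Qed.

Lemma dOcagne (a b : nat) :
  (-1) ^+ b * (Fib a%:Z * Fib b.+1%:Z - Fib b%:Z * Fib a.+1%:Z) = Fib (a%:Z - b%:Z).
Proof.
have x0 : phi != 0 by rewrite gt_eqF // phi_gt0.
have d0 : phi + phi^-1 != 0 by rewrite gt_eqF // addr_gt0 // ?invr_gt0 phi_gt0.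
set x := phi in x0 d0 *; set y := - x^-1.
have y0 : y != 0 by rewrite oppr_eq0 invr_eq0.
have dE : x + x^-1 = x - y by rewrite /y opprK.
rewrite !FibE /Fib dE.
set d := x - y in d0 dE *.
set X := x ^ (a%:Z - b%:Z); set Y := y ^ (a%:Z - b%:Z).
have hX : x ^+ a = X * x ^+ b.
  by rewrite /X !exprnP -expfzDr // subrK.
have hY : y ^+ a = Y * y ^+ b.
  by rewrite /Y !exprnP -expfzDr // subrK.
have hs : x ^+ b * y ^+ b = (-1) ^+ b.
  by rewrite -exprMn /y mulrN mulfV.
have hss : (-1) ^+ b * (-1) ^+ b = 1 :> algC.
  by rewrite -exprMn mulrNN mulr1 expr1n.
rewrite !exprS hX hY.
set xb := x ^+ b in hs *; set yb := y ^+ b in hs *.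
have E : (X * xb - Y * yb) / d * ((x * xb - y * yb) / d) -
  (xb - yb) / d * ((x * (X * xb) - y * (Y * yb)) / d) = xb * yb * (X - Y) / d.
  rewrite /d; field.
  by rewrite opprK.
rewrite -/x -/y E hs -!mulrA.
have K : forall z : algC, (-1)^+b * ((-1)^+b * z) = z by move=> z; rewrite mulrA hss mul1r.
exact: K.
Qed.

Lemma Fib0 : Fib 0%Z = 0.
Proof. by rewrite /Fib !expr0z subrr mul0r. Qed.

Lemma alg4 (w P s1 s2 s3 s4 z : algC) : w * w = -1 ->
  (w * P) * (s1 * (s4 * (s4 * (s1 * ((w * P) * z))))) + s3 * (s2 * (P * (P * (s2 * (s3 * z)))))
  = (P * P) * (s3 ^+ 2 * s2 ^+ 2 - s1 ^+ 2 * s4 ^+ 2) * z.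
Proof.
move=> hw.
have -> : (w * P) * (s1 * (s4 * (s4 * (s1 * ((w * P) * z))))) = (w * w) * (P * P) * s1 ^+ 2 * s4 ^+ 2 * z by ring.
rewrite hw; ring.
Qed.

Lemma ii : (- 'i) * (- 'i) = -1 :> algC.
Proof. by rewrite mulrNN -expr2 sqrCi. Qed.

Lemma PP (b : nat) : (- 'i) ^+ b * (- 'i) ^+ b = (-1) ^+ b :> algC.
Proof. by rewrite -exprMn ii. Qed.

Lemma part1 v n1 n2 : opadd (opcomp JpF JmF) (opcomp JmF JpF) v n1 n2 = twoJzF v n1 n2.
Proof.
move: n1 n2 => [|a] [|b]; rewrite /opadd /opcomp /JpF /JmF /twoJzF /phaseN2 /b1p /b2p /b1 /b2 /opcomp /=.
- by rewrite subrr Fib0 !mulr0 mul0r addr0.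
- rewrite mulr0 add0r -(dOcagne 0 b.+1) Fib0 mul0r sub0r.
  have -> : forall (P s t z : algC), s * (t * (P * (P * (t * (s * z))))) = (P * P) * (s ^+ 2 * t ^+ 2) * z.
    by move=> *; ring.
  by rewrite PP !sqrtCK exprS mulN1r mulrNN.
- rewrite addr0 -(dOcagne a.+1 0) Fib0 mul0r subr0 expr0 !mul1r.
  have -> : forall (s t z : algC), s * (t * (t * (s * z))) = (s ^+ 2 * t ^+ 2) * z.
    by move=> *; ring.
  by rewrite !sqrtCK.
- rewrite exprS alg4 ?ii // PP !sqrtCK -(dOcagne a.+1 b.+1) exprS.
  congr (_ * _); rewrite -[_ - _]opprB; ring.
Qed.

Lemma part2 v n1 n2 : commut JzF JpF v n1 n2 = JpF v n1 n2.
Proof.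
move: n1 => [|a]; rewrite /commut /opsub /JzF /Jz /opcomp /JpF /JmF /phaseN2 /b1p /b2p /b1 /b2 /opcomp /=.
- by rewrite !mulr0 subrr.
- rewrite !mulrSr; field.
  by [].
Qed.

Lemma part3 v n1 n2 : commut JzF JmF v n1 n2 = opopp JmF v n1 n2.
Proof.
move: n2 => [|b]; rewrite /commut /opsub /opopp /JzF /Jz /opcomp /JpF /JmF /phaseN2 /b1p /b2p /b1 /b2 /opcomp /=.
- by rewrite !mulr0 subrr oppr0.
- rewrite !mulrSr; field.
  by [].
Qed.

Theorem mainTheorem15 :
  forall v : vec, fin_supp v ->
    opadd (opcomp JpF JmF) (opcomp JmF JpF) v = twoJzF v /\
    commut JzF JpF v = JpF v /\
    commut JzF JmF v = opopp JmF v.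
Proof.
move=> v _; split; [|split];
  do 2 (apply: functional_extensionality => ?).
- exact: part1.
- exact: part2.
- exact: part3.
Qed.
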